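(* Let $b\ge 0$ and $h\ge 2b+1$ be integers, let $H$ be a set of $h$ vertices, and fix $\beta>0$. Let $M^1,M^2,M^3$ be any three transition matrices (as defined in the context). Then the product $M^1M^2M^3$ is a scrambling matrix, i.e. it has at least one column all of whose entries are strictly positive.
   Context: A reduced graph on $H$ is a directed graph obtained from the complete directed graph (without self-loops) on $H$ by deleting, for each vertex, an arbitrary set of $b$ of its incoming edges. A transition matrix is an $h\times h$ row-stochastic matrix $M$ with nonnegative real entries, rows and columns indexed by $H$, for which there is a reduced graph $R$ on $H$ such that $M_{ij}\ge\beta$ whenever $j=i$ or $(j,i)$ is an edge of $R$. (This models one phase of $D$ iterations of the Relay-IABC protocol: honest node $i$'s new state is a weighted combination, with weights at least $\beta$, of its own state and the states of its in-neighbors in the reduced graph remaining after trimming.) *)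

(* Defs.v *)
From mathcomp Require Import all_boot all_order all_algebra.
From mathcomp Require Import reals.
Set Implicit Arguments. Unset Strict Implicit. Unset Printing Implicit Defensive.
Import Order.TTheory GRing.Theory Num.Theory.
Local Open Scope ring_scope.

(* A reduced graph on H = 'I_h (with parameter b) is described by, for each
   vertex i, the set D i of in-neighbours whose edges (j,i) are deleted from
   the complete directed graph without self-loops. *)
Definition reduced_deletion (h b : nat) (D : 'I_h -> {set 'I_h}) : Prop :=
  forall i : 'I_h, #|D i| = b /\ i \notin D i.

Definition reduced_edge (h : nat) (D : 'I_h -> {set 'I_h}) (j i : 'I_h) : bool :=
  (j != i) && (j \notin D i).

Definition row_stochastic (R : realType) (h : nat) (M : 'M[R]_h) : Prop :=
  (forall i j, 0 <= M i j) /\ (forall i, \sum_(j < h) M i j = 1).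

Definition transition_matrix (R : realType) (h b : nat) (beta : R)
    (M : 'M[R]_h) : Prop :=
  row_stochastic M /\
  exists D : 'I_h -> {set 'I_h}, reduced_deletion b D /\
    forall i j : 'I_h, (j == i) || reduced_edge D j i -> beta <= M i j.

Definition scrambling (R : realType) (h : nat) (M : 'M[R]_h) : Prop :=
  exists j : 'I_h, forall i : 'I_h, 0 < M i j.

(* Main.v *)
Require Import Defs.
From mathcomp Require Import all_boot all_order all_algebra.
From mathcomp Require Import reals.
From mathcomp Require Import zify.
Set Implicit Arguments. Unset Strict Implicit. Unset Printing Implicit Defensive.
Import Order.TTheory GRing.Theory Num.Theory.
Local Open Scope ring_scope.

Lemma mulmx_entry_ge (R : realType) n (A B : 'M[R]_n) i j k :
  (forall i j, 0 <= A i j) -> (forall i j, 0 <= B i j) ->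
  A i j * B j k <= (A *m B) i k.
Proof.
move=> A0 B0; rewrite mxE (bigD1 j) //= lerDl.
by apply: sumr_ge0 => l _; apply: mulr_ge0.
Qed.

Lemma mulmx_ge0 (R : realType) n (A B : 'M[R]_n) :
  (forall i j, 0 <= A i j) -> (forall i j, 0 <= B i j) ->
  forall i k, 0 <= (A *m B) i k.
Proof.
move=> A0 B0 i k; rewrite mxE; apply: sumr_ge0 => l _; exact: mulr_ge0.
Qed.

Lemma card_T (n b : nat) (D : 'I_n -> {set 'I_n}) :
  reduced_deletion b D ->
  (\sum_(k < n) #|[set l | k \notin D l]| = n * (n - b))%N.
Proof.
move=> HD.
have -> : (\sum_(k < n) #|[set l | k \notin D l]| =
           \sum_(k < n) \sum_(l < n) (k \notin D l : nat))%N.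
  apply: eq_bigr => k _; rewrite -sum1_card [LHS]big_mkcond /=.
  by apply: eq_bigr => l _; rewrite inE; case: (k \notin D l).
rewrite exchange_big /=.
have -> : (\sum_(l < n) \sum_(k < n) (k \notin D l : nat) =
           \sum_(l < n) (n - b))%N.
  apply: eq_bigr => l _.
  have := cardsC (D l); rewrite card_ord (proj1 (HD l)) => E.
  have -> : (\sum_(k < n) (k \notin D l : nat) = #|~: D l|)%N.
    rewrite -sum1_card [RHS]big_mkcond /=; apply: eq_bigr => k _.
    by rewrite inE; case: (k \notin D l).
  lia.
by rewrite sum_nat_const card_ord.
Qed.

Theorem theorem2 (R : realType) (b h : nat) (beta : R)
    (M1 M2 M3 : 'M[R]_h) :
  (2 * b + 1 <= h)%N -> 0 < beta ->
  transition_matrix b beta M1 ->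
  transition_matrix b beta M2 ->
  transition_matrix b beta M3 ->
  scrambling (M1 *m M2 *m M3).
Proof.
case: h M1 M2 M3 => [|n] M1 M2 M3 Hh bpos; first by rewrite addn1 ltn0 in Hh.
move=> [[A1 _] [D1 [HD1 B1]]] [[A2 _] [D2 [HD2 B2]]] [[A3 _] [D3 [HD3 B3]]].
pose T k := [set l | k \notin D3 l].
pose k := [arg max_(k > (ord0 : 'I_n.+1)) #|T k|].
have Tk : (n.+1 - b <= #|T k|)%N.
  rewrite /k; case: arg_maxnP => // k0 _ Hmax.
  have := card_T HD3.
  have : (\sum_(k1 < n.+1) #|[set l | k1 \notin D3 l]| <= \sum_(k1 < n.+1) #|T k0|)%N.
    by apply: leq_sum => k1 _; exact: Hmax.
  rewrite sum_nat_const card_ord => H1 H2.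
  rewrite H2 in H1.
  by rewrite leq_pmul2l in H1.
have col : forall j, 0 < (M2 *m M3) j k.
  move=> j.
  have : (0 < #|~: D2 j :&: T k|)%N.
    have := cardsUI (~: D2 j) (T k).
    have := cardsC (D2 j); rewrite card_ord (proj1 (HD2 j)).
    have := max_card (~: D2 j :|: T k); rewrite card_ord.
    move: Tk Hh; clearbody k T; move: #|~: D2 j :&: T k| #|~: D2 j :|: T k| #|~: D2 j| #|T k| => x y z w; lia.
  case/card_gt0P => l; rewrite !inE => /andP[l2 l3].
  apply: (lt_le_trans _ (mulmx_entry_ge j l k A2 A3)).
  apply: mulr_gt0; [apply: (lt_le_trans bpos); apply: B2|
                    apply: (lt_le_trans bpos); apply: B3].
  - by rewrite /reduced_edge l2 andbT; case: (l == j).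
  - by rewrite /reduced_edge l3 andbT; case: (k == l).
exists k => i; rewrite -mulmxA.
apply: (lt_le_trans _ (mulmx_entry_ge i i k A1 (mulmx_ge0 A2 A3))).
apply: mulr_gt0 => //; apply: (lt_le_trans bpos); apply: B1; by rewrite eqxx.
Qed.
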